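(* Let $X$ be an arbitrary topological space and let $U\subseteq X$ be a subset consisting of pairwise topologically indistinguishable points (i.e. for every open $V\subseteq X$, if $U\cap V\neq\emptyset$ then $U\subseteq V$). Let $f:X\to X$ be a (not necessarily continuous) bijection such that $f|_{X\setminus U}$ is the identity. Then (1) $f$ is a homeomorphism; and (2) $f$ and $\mathrm{Id}_X$ are isotopic, and moreover isotopic relative to $X\setminus U$ (i.e. via an isotopy $H$ with $H(x,t)=x$ for all $x\in X\setminus U$ and all $t$).
   Context: Two homeomorphisms $f,g$ of $X$ are isotopic if there is a continuous map $H:X\times[0,1]\to X$ such that each $H_t=H(\cdot,t)$ is a homeomorphism of $X$, $H_0=f$ and $H_1=g$. *)

(* Defs.v *)
From HB Require Import structures.
From mathcomp Require Import all_boot all_order all_algebra.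
From mathcomp Require Import all_classical all_reals all_analysis.
Set Implicit Arguments. Unset Strict Implicit. Unset Printing Implicit Defensive.
Import Order.TTheory GRing.Theory Num.Theory.
Local Open Scope classical_set_scope.
Local Open Scope ring_scope.

Definition homeomorphism (X : topologicalType) (f : X -> X) : Prop :=
  exists g : X -> X, [/\ cancel f g, cancel g f, continuous f & continuous g].

Definition indistinguishable_set (X : topologicalType) (U : set X) : Prop :=
  forall V : set X, open V -> U `&` V !=set0 -> U `<=` V.

(* The unit interval is
   `[0,1] in R, with the subspace topology of the product X * R. *)
Definition isotopic_rel (R : realType) (X : topologicalType)
    (A : set X) (f g : X -> X) : Prop :=
  exists H : X * R -> X,
    [/\ {within [set: X] `*` [set` `[0%R, 1%R]], continuous H},
        (forall t : R, [set` `[0%R, 1%R]] t -> homeomorphism (fun x => H (x, t))),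
        (forall x, H (x, 0%R) = f x),
        (forall x, H (x, 1%R) = g x) &
        (forall x t, A x -> [set` `[0%R, 1%R]] t -> H (x, t) = x)].

Definition isotopic (R : realType) (X : topologicalType) (f g : X -> X) : Prop :=
  isotopic_rel R set0 f g.

(* Main.v *)
Require Import Defs.
From HB Require Import structures.
From mathcomp Require Import all_boot all_order all_algebra.
From mathcomp Require Import all_classical all_reals all_analysis.
Local Open Scope classical_set_scope.
Local Open Scope ring_scope.

Lemma fix_cont (X Y : topologicalType) (p : Y -> X) (g : Y -> X) :
  continuous p -> (forall V : set X, open V -> forall y, V (g y) <-> V (p y)) ->
  continuous g.
Proof.
move=> cp hV; apply/continuousP => V oV.
have -> : g @^-1` V = p @^-1` V.
  by rewrite eqEsubset; split => y /= Hy; apply/(hV V oV).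
by move/continuousP: cp; apply.
Qed.

Theorem lemma2p1 (R : realType) (X : topologicalType) (U : set X) (f : X -> X) :
  indistinguishable_set U ->
  bijective f ->
  (forall x, ~ U x -> f x = x) ->
  homeomorphism f /\ isotopic R f id /\ isotopic_rel R (~` U) f id.
Proof.
move=> hU [g fK gK] hf.
have fU : forall x, U x -> U (f x).
  move=> x Ux; apply: contrapT => nU.
  have e := hf _ nU; apply: nU; by move/(f_equal g): e; rewrite !fK => ->.
have gfix : forall x, ~ U x -> g x = x.
  by move=> x nU; rewrite -{1}(hf _ nU) fK.
have gU : forall x, U x -> U (g x).
  move=> x Ux; apply: contrapT => nU.
  have e := gfix _ nU; apply: nU; by move/(f_equal f): e; rewrite !gK => ->.
have key : forall h : X -> X, (forall x, U x -> U (h x)) -> (forall x, ~ U x -> h x = x) ->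
    forall V : set X, open V -> forall x, V (h x) <-> V x.
  move=> h hUh hfh V oV x.
  have [Ux|nU] := pselect (U x); last by rewrite hfh.
  split => Hv.
    by apply: (hU V oV) => //; exists (h x); split => //; exact: hUh.
  by apply: (hU V oV) => //; [exists x | exact: hUh].
have cf : continuous f.
  apply: (@fix_cont X X id); first by move=> x.
  by move=> V oV y; exact: (key _ fU hf V oV y).
have cg : continuous g.
  apply: (@fix_cont X X id); first by move=> x.
  by move=> V oV y; exact: (key _ gU gfix V oV y).
have hom : homeomorphism f by exists g.
pose H := fun p : X * R => if p.2 == 0 then f p.1 else p.1.
have homt : forall t : R, homeomorphism (fun x => H (x, t)).
  move=> t; rewrite /H /=; case: (t == 0); first exact: hom.
  by exists id; split => // x; exact: cvg_id.
have iso : forall A : set X, (forall x, A x -> ~ U x) -> isotopic_rel R A f id.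
  move=> A hA; exists H; split.
  - apply: continuous_subspaceT; apply: (@fix_cont _ _ fst).
      by move=> x; exact: cvg_fst.
    move=> V oV [x t]; rewrite /H /=.
    by case: ifP => _ //; exact: (key _ fU hf V oV x).
  - by move=> t _; exact: homt.
  - by move=> x; rewrite /H /= eqxx.
  - by move=> x; rewrite /H /= GRing.oner_eq0.
  - move=> x t Ax _; rewrite /H /=; case: ifP => _ //; exact: hf (hA _ Ax).
split => //; split; apply: iso => //.
Qed.
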